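(* Let $(E,\tau)$ be a violator space, $X\subseteq E$ and $x\in X$. Then $x$ is an extreme point of $X$ if and only if $x\in B$ for every $B\subseteq X$ with $\tau(B)=\tau(X)$.
   Context: $E$ is a finite set and $\tau:2^E\to 2^E$. $(E,\tau)$ is a violator space if (C1) $Y\subseteq\tau(Y)$ for all $Y\subseteq E$, and (C22) for all $F,G\subseteq E$, $F\subseteq G\subseteq\tau(F)$ implies $\tau(G)=\tau(F)$. An element $x\in X$ is an extreme point of $X$ if $x\notin\tau(X-\{x\})$. *)

(* Defs.v *)
From mathcomp Require Import all_boot.
Set Implicit Arguments. Unset Strict Implicit. Unset Printing Implicit Defensive.

Definition violator_space (E : finType) (tau : {set E} -> {set E}) : Prop :=
  (forall Y : {set E}, Y \subset tau Y) /\
  (forall F G : {set E}, F \subset G -> G \subset tau F -> tau G = tau F).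

Definition extreme_point (E : finType) (tau : {set E} -> {set E})
    (X : {set E}) (x : E) : Prop :=
  x \in X /\ x \notin tau (X :\ x).

(* Main.v *)
Require Import Defs.
From mathcomp Require Import all_boot.

Theorem mainTheorem12 (E : finType) (tau : {set E} -> {set E})
    (X : {set E}) (x : E) :
  violator_space tau -> x \in X ->
  (extreme_point tau X x <->
   (forall B : {set E}, B \subset X -> tau B = tau X -> x \in B)).
Proof.
move=> [C1 C22] xX; split.
- move=> [_ nx] B BX tBX; apply/negPn/negP => xB.
  have BXx : B \subset X :\ x.
    by apply/subsetP => y yB; rewrite in_setD1 (subsetP BX _ yB) andbT;
       apply/negP => /eqP Eyx; move: xB; rewrite -Eyx yB.
  have h : tau (X :\ x) = tau B.
    apply: C22 => //; apply: subset_trans (subsetDl X [set x]) _.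
    by rewrite tBX C1.
  by move: nx; rewrite h tBX (subsetP (C1 X) _ xX).
- move=> H; split => //; apply/negP => xt.
  have h : tau X = tau (X :\ x).
    apply: C22; first exact: subsetDl.
    apply/subsetP => y yX; case: (eqVneq y x) => [->//|ne].
    by apply: (subsetP (C1 _)); rewrite in_setD1 ne yX.
  have := H (X :\ x) (subsetDl _ _) (esym h).
  by rewrite in_setD1 eqxx.
Qed.
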